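(* Every connected configuration of $n\geq 2$ particles on the triangular lattice with no holes has perimeter at least $\sqrt{n}$.
   Context: Let $\Gamma$ be the triangular lattice. A configuration of $n$ particles is a set of $n$ vertices of $\Gamma$ (up to translation). It is connected if the subgraph of $\Gamma$ induced by the occupied vertices is connected. A hole is a maximal finite connected set of unoccupied vertices. For a connected configuration with no holes, its perimeter is the length of the closed walk around its single external boundary, with an edge traversed twice counted twice. *)

(* Defs.v *)
From Stdlib Require Import ZArith List Reals.
Import ListNotations.

(** Triangular lattice in axial coordinates: the point (x,y) is embedded at
    (x + y/2, y*sqrt(3)/2). Neighbours of (x,y) are (x,y)+dir i, i = 0..5,
    listed in COUNTERCLOCKWISE order: E, NE, NW, W, SW, SE. *)
Definition point := (Z * Z)%type.

Definition padd (p q : point) : point := (fst p + fst q, snd p + snd q)%Z.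
Definition psub (p q : point) : point := (fst p - fst q, snd p - snd q)%Z.

Definition dir (i : nat) : point :=
  match Nat.modulo i 6 with
  | 0 => (1, 0)%Z
  | 1 => (0, 1)%Z
  | 2 => (-1, 1)%Z
  | 3 => (-1, 0)%Z
  | 4 => (0, -1)%Z
  | _ => (1, -1)%Z
  end.

Definition adj (p q : point) : Prop := exists i, (i < 6)%nat /\ q = padd p (dir i).

Definition peqb (p q : point) : bool := Z.eqb (fst p) (fst q) && Z.eqb (snd p) (snd q).

Definition occb (C : list point) (p : point) : bool := existsb (peqb p) C.

Inductive path_in (S : point -> Prop) : point -> point -> Prop :=
| path_refl p : S p -> path_in S p p
| path_step p q r : S p -> adj p q -> path_in S q r -> path_in S p r.

Definition connected (C : list point) : Prop :=
  forall p q, In p C -> In q C -> path_in (fun x => In x C) p q.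

(** A hole is a maximal finite connected set of unoccupied vertices, i.e. a
    connected component of the unoccupied vertices that is finite. *)
Definition no_holes (C : list point) : Prop :=
  forall p, ~ In p C ->
    ~ exists l : list point, forall q, path_in (fun x => ~ In x C) p q -> In q l.

Definition dir_index (d : point) : nat :=
  match find (fun i => peqb (dir i) d) [0;1;2;3;4;5]%nat with
  | Some i => i
  | None => 0%nat
  end.

(** succ C v u: the first occupied neighbour of v met when rotating CLOCKWISE
    around v starting just after the direction of u (u itself comes last). *)
Definition succ (C : list point) (v u : point) : point :=
  let k := dir_index (psub u v) in
  match find (fun j => occb C (padd v (dir (k + 6 - j)))) [1;2;3;4;5;6]%nat with
  | Some j => padd v (dir (k + 6 - j))
  | None => u
  end.

(** Darts (directed edges) and the face permutation: after traversing u -> v,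
    continue with v -> succ v u. This traces each face with the face on the
    left of the dart (bounded faces counterclockwise, the outer face clockwise). *)
Definition dart := (point * point)%type.
Definition next (C : list point) (d : dart) : dart := (snd d, succ C (snd d) (fst d)).

(** The bottom-most, then left-most occupied vertex: it lies on the external
    boundary, with the outer face in the directions W, SW, SE. *)
Definition bottom_left (C : list point) (u : point) : Prop :=
  In u C /\ forall q, In q C -> (snd u < snd q)%Z \/ (snd u = snd q /\ (fst u <= fst q)%Z).

(** The dart leaving u with the outer face on its left. *)
Definition start_dart (C : list point) (u : point) : dart :=
  (u, succ C u (padd u (dir 3))).

(** Perimeter = length of the closed walk around the external boundary
    (period of the outer-face dart orbit; edges traversed twice count twice). *)
Definition perimeter (C : list point) (p : nat) : Prop :=
  exists u, bottom_left C u /\ (0 < p)%nat /\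
    Nat.iter p (next C) (start_dart C u) = start_dart C u /\
    forall k, (0 < k < p)%nat -> Nat.iter k (next C) (start_dart C u) <> start_dart C u.

(* Main.v *)
Require Import Defs.
From Stdlib Require Import ZArith List Reals Lia Lra Bool Arith ClassicalDescription Classical.
Import ListNotations.

Definition nb (v : point) (i : nat) : point := padd v (dir i).

Lemma mod6_lt i : i mod 6 < 6.
Proof. apply Nat.mod_upper_bound; lia. Qed.

Lemma dir_mod i : dir i = dir (i mod 6).
Proof. unfold dir. rewrite Nat.Div0.mod_mod. reflexivity. Qed.

Lemma dir_shift i k : dir (i + k) = dir (i mod 6 + k).
Proof.
  rewrite (dir_mod (i+k)), (dir_mod (i mod 6 + k)). f_equal.
  rewrite (Nat.Div0.add_mod i k 6), (Nat.Div0.add_mod (i mod 6) k 6), Nat.Div0.mod_mod. reflexivity.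
Qed.

Ltac cdir := repeat match goal with |- context [dir ?n] => let d := eval vm_compute in (dir n) in change (dir n) with d end.
Ltac cases6 i :=
  let H := fresh in let m := fresh "m" in
  assert (H := mod6_lt i); revert H; destruct (i mod 6) as [|[|[|[|[|[|m]]]]]]; intro H; [..| exfalso; lia].

Lemma nb_mod v i : nb v i = nb v (i mod 6).
Proof. unfold nb. rewrite dir_mod. reflexivity. Qed.

Lemma nb_add6 v i : nb v (i+6) = nb v i.
Proof. rewrite nb_mod, (nb_mod v i). f_equal. rewrite (Nat.Div0.add_mod i 6 6), Nat.Div0.mod_same, Nat.add_0_r, Nat.Div0.mod_mod. reflexivity. Qed.

Lemma nb_back v i : nb (nb v i) (i+3) = v.
Proof.
  unfold nb. rewrite dir_shift, (dir_mod i). destruct v as [x y].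
  cases6 i; cdir; unfold padd; simpl; f_equal; lia.
Qed.

Lemma nb_tri1 v i : nb (nb v i) (i+2) = nb v (i+1).
Proof.
  unfold nb. rewrite (dir_shift i 2), (dir_shift i 1), (dir_mod i). destruct v as [x y].
  cases6 i; cdir; unfold padd; simpl; f_equal; lia.
Qed.

Lemma nb_tri2 v i : nb (nb v (i+1)) (i+5) = nb v i.
Proof.
  unfold nb. rewrite (dir_shift i 5), (dir_shift i 1), (dir_mod i). destruct v as [x y].
  cases6 i; cdir; unfold padd; simpl; f_equal; lia.
Qed.

Lemma nb_tri3 v i : nb (nb v (i+1)) (i+4) = v.
Proof.
  unfold nb. rewrite (dir_shift i 4), (dir_shift i 1). destruct v as [x y].
  cases6 i; cdir; unfold padd; simpl; f_equal; lia.
Qed.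

Lemma nb_inj v i j : nb v i = nb v j -> i mod 6 = j mod 6.
Proof.
  unfold nb. rewrite (dir_mod i), (dir_mod j). destruct v as [x y].
  cases6 i; cases6 j; cdir; unfold padd; simpl; intro Heq; first [reflexivity | injection Heq; intros; lia].
Qed.

Lemma psub_nb v i : psub (nb v i) v = dir i.
Proof. unfold nb, psub, padd. destruct v, (dir i); simpl; f_equal; lia. Qed.

Lemma dir_index_dir i : dir_index (dir i) = i mod 6.
Proof. rewrite dir_mod. cases6 i; reflexivity. Qed.

Lemma peqb_true p q : peqb p q = true <-> p = q.
Proof.
  destruct p as [a b], q as [c d]; unfold peqb; simpl.
  rewrite andb_true_iff, !Z.eqb_eq. split; [intros [-> ->]; auto | intro H; injection H; auto].
Qed.

Lemma occb_In C p : occb C p = true <-> In p C.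
Proof.
  unfold occb. rewrite existsb_exists. split.
  - intros [x [Hx Hp]]. apply peqb_true in Hp. subst; auto.
  - intro H. exists p. split; auto. apply peqb_true; auto.
Qed.

Lemma find_ext (f f' : nat -> bool) l : (forall x, f x = f' x) -> find f l = find f' l.
Proof. intro H. induction l; simpl; auto. rewrite H, IHl. reflexivity. Qed.

Definition succ_idx (g : nat -> bool) (k : nat) : nat :=
  match find (fun j => g (k + 6 - j)) [1;2;3;4;5;6] with Some j => k + 6 - j | None => k end.
Definition ccw_idx (g : nat -> bool) (k : nat) : nat :=
  match find (fun j => g (k + j)) [1;2;3;4;5;6] with Some j => k + j | None => k end.

Definition G (b0 b1 b2 b3 b4 b5 : bool) (m : nat) : bool :=
  match m mod 6 with 0 => b0 | 1 => b1 | 2 => b2 | 3 => b3 | 4 => b4 | _ => b5 end.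

Definition anyb (g : nat -> bool) := g 0 || g 1 || g 2 || g 3 || g 4 || g 5.

Lemma succ_idx_ext g g' k : (forall m, g m = g' m) -> succ_idx g k = succ_idx g' k.
Proof. intro H. unfold succ_idx. rewrite (find_ext _ (fun j => g' (k+6-j))); auto. Qed.
Lemma ccw_idx_ext g g' k : (forall m, g m = g' m) -> ccw_idx g k = ccw_idx g' k.
Proof. intro H. unfold ccw_idx. rewrite (find_ext _ (fun j => g' (k+j))); auto. Qed.

Ltac absc k := destruct k as [|[|[|[|[|[|k]]]]]]; [..|exfalso; lia].
Ltac bools b0 b1 b2 b3 b4 b5 := destruct b0, b1, b2, b3, b4, b5.

Lemma A1 b0 b1 b2 b3 b4 b5 k : k < 6 -> anyb (G b0 b1 b2 b3 b4 b5) = true ->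
  G b0 b1 b2 b3 b4 b5 (succ_idx (G b0 b1 b2 b3 b4 b5) k) = true.
Proof. intros Hk; absc k; bools b0 b1 b2 b3 b4 b5; vm_compute; auto. Qed.

Lemma A2 b0 b1 b2 b3 b4 b5 k k' : k < 6 -> k' < 6 ->
  G b0 b1 b2 b3 b4 b5 k = true -> G b0 b1 b2 b3 b4 b5 k' = true ->
  succ_idx (G b0 b1 b2 b3 b4 b5) k mod 6 = succ_idx (G b0 b1 b2 b3 b4 b5) k' mod 6 -> k = k'.
Proof. intros Hk Hk'; absc k; absc k'; bools b0 b1 b2 b3 b4 b5; vm_compute; intros; try reflexivity; congruence. Qed.

Lemma A3 b0 b1 b2 b3 b4 b5 k : k < 6 -> anyb (G b0 b1 b2 b3 b4 b5) = true ->
  G b0 b1 b2 b3 b4 b5 (ccw_idx (G b0 b1 b2 b3 b4 b5) k) = true.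
Proof. intros Hk; absc k; bools b0 b1 b2 b3 b4 b5; vm_compute; auto. Qed.

Lemma A4 b0 b1 b2 b3 b4 b5 k : k < 6 -> anyb (G b0 b1 b2 b3 b4 b5) = true ->
  G b0 b1 b2 b3 b4 b5 k = false ->
  succ_idx (G b0 b1 b2 b3 b4 b5) (ccw_idx (G b0 b1 b2 b3 b4 b5) k mod 6) mod 6
  = succ_idx (G b0 b1 b2 b3 b4 b5) k mod 6.
Proof. intros Hk; absc k; bools b0 b1 b2 b3 b4 b5; vm_compute; intros; try reflexivity; congruence. Qed.

Lemma A5 b0 b1 b2 b3 b4 b5 k : k < 6 -> anyb (G b0 b1 b2 b3 b4 b5) = true ->
  G b0 b1 b2 b3 b4 b5 k = false -> G b0 b1 b2 b3 b4 b5 ((k+1) mod 6) = false ->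
  ccw_idx (G b0 b1 b2 b3 b4 b5) k mod 6 = ccw_idx (G b0 b1 b2 b3 b4 b5) ((k+1) mod 6) mod 6.
Proof. intros Hk; absc k; bools b0 b1 b2 b3 b4 b5; vm_compute; intros; try reflexivity; congruence. Qed.

Lemma A6 b0 b1 b2 b3 b4 b5 k : k < 6 -> G b0 b1 b2 b3 b4 b5 k = true ->
  succ_idx (G b0 b1 b2 b3 b4 b5) ((k+1) mod 6) mod 6 = k.
Proof. intros Hk; absc k; bools b0 b1 b2 b3 b4 b5; vm_compute; intros; try reflexivity; congruence. Qed.

Lemma A7 b0 b1 b2 b3 b4 b5 k : k < 6 -> G b0 b1 b2 b3 b4 b5 ((k+1) mod 6) = true ->
  ccw_idx (G b0 b1 b2 b3 b4 b5) k mod 6 = (k+1) mod 6.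
Proof. intros Hk; absc k; bools b0 b1 b2 b3 b4 b5; vm_compute; intros; try reflexivity; congruence. Qed.

Lemma A8 b0 b1 b2 b3 b4 b5 k : k < 6 -> anyb (G b0 b1 b2 b3 b4 b5) = true ->
  G b0 b1 b2 b3 b4 b5 k = false ->
  succ_idx (G b0 b1 b2 b3 b4 b5) ((k+1) mod 6) mod 6 = succ_idx (G b0 b1 b2 b3 b4 b5) k mod 6.
Proof. intros Hk; absc k; bools b0 b1 b2 b3 b4 b5; vm_compute; intros; try reflexivity; congruence. Qed.

Definition gv C v := fun m => occb C (nb v m).
Definition Gv C v := G (gv C v 0) (gv C v 1) (gv C v 2) (gv C v 3) (gv C v 4) (gv C v 5).

Lemma B1 C v k : k < 6 -> anyb (Gv C v) = true -> Gv C v (succ_idx (Gv C v) k) = true.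
Proof. unfold Gv; apply A1. Qed.
Lemma B2 C v k k' : k < 6 -> k' < 6 -> Gv C v k = true -> Gv C v k' = true ->
  succ_idx (Gv C v) k mod 6 = succ_idx (Gv C v) k' mod 6 -> k = k'.
Proof. unfold Gv; apply A2. Qed.
Lemma B3 C v k : k < 6 -> anyb (Gv C v) = true -> Gv C v (ccw_idx (Gv C v) k) = true.
Proof. unfold Gv; apply A3. Qed.
Lemma B4 C v k : k < 6 -> anyb (Gv C v) = true -> Gv C v k = false ->
  succ_idx (Gv C v) (ccw_idx (Gv C v) k mod 6) mod 6 = succ_idx (Gv C v) k mod 6.
Proof. unfold Gv; apply A4. Qed.
Lemma B5 C v k : k < 6 -> anyb (Gv C v) = true -> Gv C v k = false -> Gv C v ((k+1) mod 6) = false ->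
  ccw_idx (Gv C v) k mod 6 = ccw_idx (Gv C v) ((k+1) mod 6) mod 6.
Proof. unfold Gv; apply A5. Qed.
Lemma B6 C v k : k < 6 -> Gv C v k = true -> succ_idx (Gv C v) ((k+1) mod 6) mod 6 = k.
Proof. unfold Gv; apply A6. Qed.
Lemma B7 C v k : k < 6 -> Gv C v ((k+1) mod 6) = true -> ccw_idx (Gv C v) k mod 6 = (k+1) mod 6.
Proof. unfold Gv; apply A7. Qed.
Lemma B8 C v k : k < 6 -> anyb (Gv C v) = true -> Gv C v k = false ->
  succ_idx (Gv C v) ((k+1) mod 6) mod 6 = succ_idx (Gv C v) k mod 6.
Proof. unfold Gv; apply A8. Qed.

Lemma gv_G C v m : gv C v m = Gv C v m.
Proof.
  unfold Gv, G, gv. rewrite nb_mod. cases6 m; reflexivity.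
Qed.

Lemma Gv_In C v m : Gv C v m = true <-> In (nb v m) C.
Proof. rewrite <- gv_G. unfold gv. apply occb_In. Qed.

Lemma Gv_notIn C v m : Gv C v m = false <-> ~ In (nb v m) C.
Proof. rewrite <- not_true_iff_false, Gv_In. tauto. Qed.

Lemma any_of C v j : In (nb v j) C -> anyb (Gv C v) = true.
Proof.
  intro H. rewrite nb_mod in H. apply Gv_In in H. unfold anyb.
  assert (E: forall m, m < 6 -> Gv C v m = true -> Gv C v 0 || Gv C v 1 || Gv C v 2 || Gv C v 3 || Gv C v 4 || Gv C v 5 = true).
  { intros m Hm Hg. absc m; rewrite Hg; rewrite ?orb_true_r; reflexivity. }
  apply (E (j mod 6)); auto. apply mod6_lt.
Qed.

Lemma succ_nb C v i : succ C v (nb v i) = nb v (succ_idx (Gv C v) (i mod 6)).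
Proof.
  unfold succ. rewrite psub_nb, dir_index_dir.
  change (match find (fun j => occb C (nb v (i mod 6 + 6 - j))) [1;2;3;4;5;6] with
          | Some j => nb v (i mod 6 + 6 - j) | None => nb v i end = nb v (succ_idx (Gv C v) (i mod 6))).
  rewrite (succ_idx_ext (Gv C v) (gv C v)) by (intro; symmetry; apply gv_G).
  unfold succ_idx, gv. destruct find; auto. rewrite <- nb_mod. reflexivity.
Qed.

Definition ccwp C v i := nb v (ccw_idx (Gv C v) (i mod 6)).

Definition valid (C : list point) (d : dart) := In (fst d) C /\ In (snd d) C /\ adj (fst d) (snd d).

Lemma adj_nb p q : adj p q <-> exists i, q = nb p i.
Proof.
  split.
  - intros [i [_ H]]. exists i. exact H.
  - intros [i H]. exists (i mod 6). split. apply mod6_lt. rewrite H, nb_mod. reflexivity.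
Qed.

Lemma adj_sym p q : adj p q -> adj q p.
Proof. rewrite !adj_nb. intros [i ->]. exists (i+3). symmetry. apply nb_back. Qed.

Lemma Gv_nb_mod C v i : Gv C v (i mod 6) = Gv C v i.
Proof. unfold Gv, G. rewrite Nat.Div0.mod_mod. reflexivity. Qed.

Lemma next_valid C d : valid C d -> valid C (next C d).
Proof.
  destruct d as [a v]. intros [Ha [Hv Hadj]]; simpl in *.
  apply adj_sym in Hadj. apply adj_nb in Hadj as [i ->].
  unfold next; simpl. rewrite succ_nb. split; [auto|split].
  - apply Gv_In. apply B1. apply mod6_lt. apply (any_of _ _ i); auto.
  - apply adj_nb. eexists; reflexivity.
Qed.

Lemma next_inj C d d' : valid C d -> valid C d' -> next C d = next C d' -> d = d'.
Proof.
  destruct d as [a v], d' as [a' v']. intros [Ha [Hv Hadj]] [Ha' [Hv' Hadj']] Heq.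
  simpl in *. unfold next in Heq; simpl in Heq. injection Heq as -> Hs.
  apply adj_sym, adj_nb in Hadj as [i ->]. apply adj_sym, adj_nb in Hadj' as [i' ->].
  rewrite !succ_nb in Hs. apply nb_inj in Hs.
  assert (i mod 6 = i' mod 6).
  { apply (B2 C v'); try apply mod6_lt.
    - rewrite Gv_nb_mod. apply Gv_In; auto.
    - rewrite Gv_nb_mod. apply Gv_In; auto.
    - exact Hs. }
  rewrite (nb_mod v' i), (nb_mod v' i'), H. reflexivity.
Qed.

Definition it C s k := Nat.iter k (next C) s.

Lemma it_valid C s k : valid C s -> valid C (it C s k).
Proof. intro H. induction k; simpl; auto. apply next_valid; auto. Qed.

Lemma it_S C s k : it C s (S k) = next C (it C s k).
Proof. reflexivity. Qed.

Lemma iter_cancel C s i m : valid C s -> it C s (i + m) = it C s i -> it C s m = it C s 0.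
Proof.
  intro Hs. induction i; simpl; auto.
  intro H. apply IHi. apply (next_inj C); try apply it_valid; auto.
Qed.

Lemma min_exists (Q : nat -> Prop) n : Q n -> exists m, Q m /\ forall k, k < m -> ~ Q k.
Proof.
  intro Hn. apply NNPP. intro Hno.
  assert (forall k, ~ Q k).
  { intro k. induction k as [k IH] using (well_founded_induction lt_wf).
    intro Hk. apply Hno. exists k. split; auto. }
  apply (H n); auto.
Qed.

Lemma return_exists C s : valid C s -> exists m, 0 < m /\ it C s m = it C s 0.
Proof.
  intro Hs. set (N := length (list_prod C C)).
  set (L := map (it C s) (seq 0 (S N))).
  assert (Hinc : incl L (list_prod C C)).
  { intros d Hd. unfold L in Hd. apply in_map_iff in Hd as [k [<- _]].
    destruct (it_valid C s k Hs) as [H1 [H2 _]]. destruct (it C s k). apply in_prod; auto. }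
  assert (Hnd : ~ NoDup L).
  { intro Hnd. apply NoDup_incl_length in Hinc; auto. unfold L in Hinc.
    rewrite length_map, length_seq in Hinc. unfold N in Hinc. exact (Nat.lt_irrefl _ Hinc). }
  apply NNPP. intro Hno. apply Hnd. unfold L. apply NoDup_map_NoDup_ForallPairs; [|apply seq_NoDup].
  intros a b Ha Hb Hab. apply in_seq in Ha. apply in_seq in Hb.
  destruct (lt_eq_lt_dec a b) as [[Hlt|Heq]|Hgt]; auto.
  - exfalso. apply Hno. exists (b - a). split. lia. apply (iter_cancel C s a); auto.
    replace (a + (b - a)) with b by lia. auto.
  - exfalso. apply Hno. exists (a - b). split. lia. apply (iter_cancel C s b); auto.
    replace (b + (a - b)) with a by lia. auto.
Qed.

Lemma it_add C s k m : it C s (k + m) = it C s k -> False \/ True.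
Proof. auto. Qed.

Lemma period_shift C s P k : it C s P = s -> it C s (k + P) = it C s k.
Proof. intro H. unfold it in *. rewrite Nat.iter_add, H. reflexivity. Qed.

Definition inO C s d := exists k, it C s k = d.

Lemma back_closure C s P d : valid C s -> 0 < P -> it C s P = s ->
  valid C d -> inO C s (next C d) -> inO C s d.
Proof.
  intros Hs HP HPs Hd [k Hk]. exists (k + P - 1).
  apply (next_inj C); auto. apply it_valid; auto.
  rewrite <- it_S. replace (S (k + P - 1)) with (k + P) by lia.
  rewrite period_shift; auto.
Qed.

Lemma inO_next C s d : inO C s d -> inO C s (next C d).
Proof. intros [k Hk]. exists (S k). rewrite it_S, Hk. reflexivity. Qed.

Definition Hyp C s P := valid C s /\ 0 < P /\ it C s P = s /\ (forall v, In v C -> exists j, In (nb v j) C).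

Definition Sidx C s v i : Prop := In v C /\ ~ In (nb v i) C /\ inO C s (ccwp C v i, v).
Definition E C s p i := Sidx C s p i \/ Sidx C s (nb p i) (i+3).
Definition eb C s p i : bool := if excluded_middle_informative (E C s p i) then true else false.

Lemma mod_p k i : (i mod 6 + k) mod 6 = (i + k) mod 6.
Proof. apply Nat.Div0.add_mod_idemp_l. Qed.

Lemma mod_add6 i : (i + 6) mod 6 = i mod 6.
Proof. replace (i+6) with (i + 1*6) by lia. apply Nat.Div0.mod_add. Qed.

Lemma ccwp_add6 C v i : ccwp C v (i+6) = ccwp C v i.
Proof. unfold ccwp. rewrite mod_add6. reflexivity. Qed.

Lemma Sidx_add6 C s v i : Sidx C s v (i+6) <-> Sidx C s v i.
Proof. unfold Sidx. rewrite ccwp_add6, nb_add6. tauto. Qed.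

Lemma E_sym C s p i : E C s (nb p i) (i+3) <-> E C s p i.
Proof.
  unfold E. rewrite nb_back. replace (i+3+3) with (i+6) by lia. rewrite Sidx_add6. tauto.
Qed.

Lemma eb_iff C s p i q j : (E C s p i <-> E C s q j) -> eb C s p i = eb C s q j.
Proof.
  intro H. unfold eb. destruct (excluded_middle_informative (E C s p i)), (excluded_middle_informative (E C s q j)); tauto.
Qed.

Lemma eb_false C s p i : ~ E C s p i -> eb C s p i = false.
Proof. intro H. unfold eb. destruct (excluded_middle_informative (E C s p i)); tauto. Qed.

Lemma eb_sym C s p i : eb C s (nb p i) (i+3) = eb C s p i.
Proof. apply eb_iff. apply E_sym. Qed.

Lemma eb_add6 C s p i : eb C s p (i+6) = eb C s p i.
Proof. apply eb_iff. unfold E. rewrite Sidx_add6, nb_add6. replace (i+6+3) with ((i+3)+6) by lia.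
  rewrite Sidx_add6. tauto. Qed.

Lemma E_occ_occ C s p i : In p C -> In (nb p i) C -> ~ E C s p i.
Proof. intros H1 H2 [[_ [H _]]|[_ [H _]]]; auto. rewrite nb_back in H. auto. Qed.

Lemma E_emp_emp C s p i : ~ In p C -> ~ In (nb p i) C -> ~ E C s p i.
Proof. intros H1 H2 [[H _]|[H _]]; auto. Qed.

Lemma E_left C s p i : In p C -> ~ In (nb p i) C -> (E C s p i <-> Sidx C s p i).
Proof. intros H1 H2. unfold E. split; [intros [H|[H _]]|]; tauto. Qed.

Lemma E_right C s p i : ~ In p C -> In (nb p i) C -> (E C s p i <-> Sidx C s (nb p i) (i+3)).
Proof. intros H1 H2. unfold E. split; [intros [[H _]|H]|]; tauto. Qed.

Lemma K C v i : In v C -> anyb (Gv C v) = true -> ~ In (nb v i) C ->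
  valid C (ccwp C v i, v) /\ next C (ccwp C v i, v) = (v, nb v (succ_idx (Gv C v) (i mod 6))).
Proof.
  intros Hv Ha Hx. unfold ccwp. set (c := ccw_idx (Gv C v) (i mod 6)). split.
  - split; [|split]; simpl; auto.
    + apply Gv_In. apply B3; auto. apply mod6_lt.
    + apply adj_nb. exists (c+3). symmetry. apply nb_back.
  - unfold next; simpl. rewrite succ_nb. f_equal.
    rewrite nb_mod, (nb_mod v (succ_idx _ (i mod 6))). f_equal. apply B4; auto. apply mod6_lt.
    rewrite Gv_nb_mod. apply Gv_notIn; auto.
Qed.

Lemma Sidx_out C s P v i : Hyp C s P -> In v C -> ~ In (nb v i) C ->
  (Sidx C s v i <-> inO C s (v, nb v (succ_idx (Gv C v) (i mod 6)))).
Proof.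
  intros [Hs [HP [HPs HC]]] Hv Hx.
  destruct (HC v Hv) as [j Hj]. pose proof (any_of C v j Hj) as Ha.
  destruct (K C v i Hv Ha Hx) as [Hval Hn]. unfold Sidx. split.
  - intros [_ [_ H]]. rewrite <- Hn. apply inO_next; auto.
  - intro H. split; auto. split; auto. apply (back_closure C s P); auto. rewrite Hn; auto.
Qed.

Lemma any_v C s P v : Hyp C s P -> In v C -> anyb (Gv C v) = true.
Proof. intros [_ [_ [_ HC]]] Hv. destruct (HC v Hv) as [j Hj]. apply (any_of C v j Hj). Qed.

Lemma ccwp_next C v i : In (nb v (i+1)) C -> ccwp C v i = nb v (i+1).
Proof.
  intro H. unfold ccwp. rewrite nb_mod, (nb_mod v (i+1)). f_equal.
  rewrite B7. apply mod_p. apply mod6_lt. rewrite mod_p, Gv_nb_mod. apply Gv_In; auto.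
Qed.

Lemma succ_prev C v i : In (nb v i) C -> nb v (succ_idx (Gv C v) ((i+1) mod 6)) = nb v i.
Proof.
  intro H. rewrite nb_mod, (nb_mod v i). f_equal.
  rewrite <- mod_p. apply B6. apply mod6_lt. rewrite Gv_nb_mod. apply Gv_In; auto.
Qed.

Lemma Tocc C s P v i : Hyp C s P -> In v C ->
  xorb (eb C s v i) (eb C s (nb v i) (i+2)) = eb C s v (i+1).
Proof.
  intros HH Hv. set (a := nb v i). set (b := nb v (i+1)).
  assert (Hab : nb a (i+2) = b) by apply nb_tri1.
  assert (Hba : nb b (i+5) = a) by apply nb_tri2.
  assert (Hbv : nb b (i+4) = v) by apply nb_tri3.
  assert (Hav : nb a (i+3) = v) by apply nb_back.
  destruct (classic (In a C)) as [Ha|Ha]; destruct (classic (In b C)) as [Hb|Hb].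
  - rewrite !eb_false; auto.
    + apply E_occ_occ; auto.
    + apply E_occ_occ; [auto|]. rewrite Hab; auto.
    + apply E_occ_occ; auto.
  - rewrite (eb_false C s v i) by (apply E_occ_occ; auto). simpl.
    apply eb_iff. rewrite E_left by (auto; rewrite Hab; auto).
    rewrite (E_left C s v (i+1)) by auto.
    rewrite (Sidx_out C s P v (i+1)) by auto.
    rewrite succ_prev by auto. fold a.
    unfold Sidx. rewrite Hab. rewrite ccwp_next.
    2: { replace (i+2+1) with (i+3) by lia. rewrite Hav; auto. }
    replace (i+2+1) with (i+3) by lia. rewrite Hav. tauto.
  - rewrite (eb_false C s v (i+1)) by (apply E_occ_occ; auto).
    enough (Heq : eb C s v i = eb C s a (i+2)) by (rewrite Heq; apply xorb_nilpotent).
    apply eb_iff.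
    rewrite E_left by auto. rewrite E_right by (auto; rewrite Hab; auto).
    rewrite Hab. replace (i+2+3) with (i+5) by lia.
    rewrite (Sidx_out C s P b (i+5)) by (auto; rewrite Hba; auto).
    replace ((i+5) mod 6) with (((i+4) mod 6 + 1) mod 6) by (rewrite mod_p; f_equal; lia).
    rewrite (succ_prev C b ((i+4) mod 6)) by (rewrite <- nb_mod, Hbv; auto).
    rewrite <- nb_mod, Hbv.
    unfold Sidx. rewrite ccwp_next by auto. fold a b. tauto.
  - rewrite (eb_false C s a (i+2)) by (apply E_emp_emp; auto; rewrite Hab; auto).
    rewrite xorb_false_r. apply eb_iff.
    rewrite E_left by auto. rewrite (E_left C s v (i+1)) by auto.
    unfold Sidx. replace (ccwp C v (i+1)) with (ccwp C v i). tauto.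
    unfold ccwp. rewrite nb_mod, (nb_mod v (ccw_idx _ ((i+1) mod 6))). f_equal.
    rewrite <- mod_p. apply B5. apply mod6_lt. apply (any_v C s P); auto.
    rewrite Gv_nb_mod. apply Gv_notIn; auto.
    rewrite mod_p, Gv_nb_mod. apply Gv_notIn; auto.
Qed.

Lemma Tall C s P v i : Hyp C s P ->
  xorb (eb C s v i) (eb C s (nb v i) (i+2)) = eb C s v (i+1).
Proof.
  intros HH. set (a := nb v i). set (b := nb v (i+1)).
  assert (Hab : nb a (i+2) = b) by apply nb_tri1.
  assert (Hba : nb b (i+5) = a) by apply nb_tri2.
  assert (Hbv : nb b (i+4) = v) by apply nb_tri3.
  assert (Hav : nb a (i+3) = v) by apply nb_back.
  destruct (classic (In v C)) as [Hv|Hv]. { apply (Tocc C s P); auto. }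
  destruct (classic (In a C)) as [Ha|Ha].
  - pose proof (Tocc C s P a (i+2) HH Ha) as T. rewrite Hab in T.
    replace (i+2+2) with (i+1+3) in T by lia. replace (i+2+1) with (i+3) in T by lia.
    unfold b in T. rewrite eb_sym in T. fold b in T. unfold a in T. rewrite eb_sym in T. fold a in T.
    revert T. destruct (eb C s v i), (eb C s a (i+2)), (eb C s v (i+1)); simpl; congruence.
  - destruct (classic (In b C)) as [Hb|Hb].
    + pose proof (Tocc C s P b (i+4) HH Hb) as T. rewrite Hbv in T.
      replace (i+4+2) with (i+6) in T by lia. rewrite eb_add6 in T.
      replace (i+4+1) with (i+2+3) in T by lia. rewrite <- Hab in T. rewrite eb_sym in T.
      rewrite Hab in T. replace (i+4) with (i+1+3) in T by lia. unfold b in T. rewrite eb_sym in T.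
      fold b in T.
      revert T. destruct (eb C s v i), (eb C s a (i+2)), (eb C s v (i+1)); simpl; congruence.
    + rewrite !eb_false; auto.
      * apply E_emp_emp; auto.
      * apply E_emp_emp; auto. rewrite Hab; auto.
      * apply E_emp_emp; auto.
Qed.

Lemma nb0 x y : nb (x,y) 0 = ((x+1)%Z, y).
Proof. unfold nb, padd. cdir. simpl. f_equal; lia. Qed.
Lemma nb1 x y : nb (x,y) 1 = (x, (y+1)%Z).
Proof. unfold nb, padd. cdir. simpl. f_equal; lia. Qed.
Lemma nb2 x y : nb (x,y) 2 = ((x-1)%Z, (y+1)%Z).
Proof. unfold nb, padd. cdir. simpl. f_equal; lia. Qed.

Fixpoint Fpar C s (Y0 : Z) (x : Z) (n : nat) : bool :=
  match n with 0 => false | S m => xorb (Fpar C s Y0 x m) (eb C s (x, (Y0 + Z.of_nat m)%Z) 1) end.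
Definition fpar C s Y0 (p : point) := Fpar C s Y0 (fst p) (Z.to_nat (snd p - Y0)).

Definition below (C : list point) (Y0 : Z) := forall p : point, In p C -> (Y0 < snd p)%Z.

Lemma fV C s Y0 x y : below C Y0 ->
  fpar C s Y0 (x, (y+1)%Z) = xorb (fpar C s Y0 (x,y)) (eb C s (x,y) 1).
Proof.
  intro HB. unfold fpar; simpl. destruct (Z_le_gt_dec Y0 y).
  - replace (Z.to_nat (y + 1 - Y0)) with (S (Z.to_nat (y - Y0))) by lia. simpl.
    f_equal. f_equal. f_equal. lia.
  - replace (Z.to_nat (y + 1 - Y0)) with 0%nat by lia. replace (Z.to_nat (y - Y0)) with 0%nat by lia.
    simpl. rewrite eb_false; auto. apply E_emp_emp.
    + intro H. apply HB in H. simpl in H. lia.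
    + rewrite nb1. intro H. apply HB in H. simpl in H. lia.
Qed.

Ltac bdestr C s := repeat match goal with |- context [eb C s ?p ?i] => destruct (eb C s p i) end.

Lemma fH C s P Y0 x y : Hyp C s P -> below C Y0 ->
  fpar C s Y0 ((x+1)%Z, y) = xorb (fpar C s Y0 (x,y)) (eb C s (x,y) 0).
Proof.
  intros HH HB.
  destruct (Z_le_gt_dec y Y0).
  - unfold fpar; simpl. replace (Z.to_nat (y - Y0)) with 0%nat by lia. simpl.
    rewrite eb_false; auto. apply E_emp_emp.
    + intro H. apply HB in H. simpl in H. lia.
    + rewrite nb0. intro H. apply HB in H. simpl in H. lia.
  - replace y with (Y0 + Z.of_nat (Z.to_nat (y - Y0)))%Z by lia.
    generalize (Z.to_nat (y - Y0)) as n. intro n. revert x. induction n; intro x.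
    + unfold fpar; simpl. replace (Z.to_nat (Y0 + 0 - Y0)) with 0%nat by lia. simpl.
      rewrite eb_false; auto. apply E_emp_emp.
      * intro H. apply HB in H. simpl in H. lia.
      * rewrite nb0. intro H. apply HB in H. simpl in H. lia.
    + replace (Y0 + Z.of_nat (S n))%Z with ((Y0 + Z.of_nat n) + 1)%Z by lia.
      set (y' := (Y0 + Z.of_nat n)%Z) in *.
      rewrite !fV by auto. rewrite IHn.
      pose proof (Tall C s P (x,y') 0 HH) as T1. rewrite nb0 in T1. simpl in T1.
      pose proof (Tall C s P ((x+1)%Z,y') 1 HH) as T2. simpl in T2. rewrite nb1 in T2.
      pose proof (eb_sym C s (x, (y'+1)%Z) 0) as T3. rewrite nb0 in T3. simpl in T3.
      rewrite T3 in T2.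
      clear T3. revert T1 T2. destruct (fpar C s Y0 (x,y')); bdestr C s; simpl; congruence.
Qed.

Lemma fD C s P Y0 x y : Hyp C s P -> below C Y0 ->
  fpar C s Y0 ((x-1)%Z, (y+1)%Z) = xorb (fpar C s Y0 (x,y)) (eb C s (x,y) 2).
Proof.
  intros HH HB. rewrite fV by auto.
  pose proof (fH C s P Y0 (x-1) y HH HB) as H1. replace (x-1+1)%Z with x in H1 by lia.
  rewrite H1.
  pose proof (Tall C s P ((x-1)%Z,y) 0 HH) as T1. rewrite nb0 in T1. simpl in T1.
  replace (x-1+1)%Z with x in T1 by lia.
  revert T1. bdestr C s; destruct (fpar C s Y0 ((x-1)%Z, y)); simpl; congruence.
Qed.

Lemma E_mod C s p i : E C s p i <-> E C s p (i mod 6).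
Proof.
  unfold E, Sidx, ccwp. rewrite (nb_mod p i), Nat.Div0.mod_mod.
  replace (nb (nb p (i mod 6)) (i+3)) with (nb (nb p (i mod 6)) (i mod 6 + 3)).
  rewrite (mod_p 3 i). tauto.
  rewrite (nb_mod _ (i+3)), (nb_mod _ (i mod 6 + 3)), mod_p. reflexivity.
Qed.

Lemma eb_mod C s p i : eb C s p i = eb C s p (i mod 6).
Proof. apply eb_iff. apply E_mod. Qed.

Lemma cob C s P Y0 p i : Hyp C s P -> below C Y0 ->
  fpar C s Y0 (nb p i) = xorb (fpar C s Y0 p) (eb C s p i).
Proof.
  intros HH HB.
  assert (L3 : forall p i, i < 3 -> fpar C s Y0 (nb p i) = xorb (fpar C s Y0 p) (eb C s p i)).
  { clear p i. intros [x y] i Hi. destruct i as [|[|[|]]]; try lia.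
    - rewrite nb0. apply (fH C s P); auto.
    - rewrite nb1. apply fV; auto.
    - rewrite nb2. apply (fD C s P); auto. }
  rewrite nb_mod, eb_mod. pose proof (mod6_lt i) as Hm.
  destruct (lt_dec (i mod 6) 3) as [Hl|Hl]. { apply L3; auto. }
  set (j := i mod 6 - 3).
  replace (i mod 6) with (j + 3) by lia. set (q := nb p (j+3)).
  assert (Hq : nb q j = p).
  { unfold q. rewrite <- (nb_add6 _ j). replace (j+6) with (j+3+3) by lia. apply nb_back. }
  assert (He : eb C s q j = eb C s p (j+3)).
  { unfold q. rewrite <- (eb_add6 C s _ j). replace (j+6) with (j+3+3) by lia. apply eb_sym. }
  pose proof (L3 q j ltac:(lia)) as H. rewrite Hq, He in H. rewrite H.
  destruct (fpar C s Y0 q), (eb C s p (j+3)); reflexivity.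
Qed.

Lemma path_start (S : point -> Prop) p q : path_in S p q -> S p.
Proof. intro H; destruct H; auto. Qed.

Lemma f_path C s P Y0 p q : Hyp C s P -> below C Y0 ->
  path_in (fun x : point => In x C) p q -> fpar C s Y0 q = fpar C s Y0 p.
Proof.
  intros HH HB H. induction H; auto.
  rewrite IHpath_in. apply path_start in H1. apply adj_nb in H0 as [i ->].
  rewrite (cob C s P) by auto. rewrite eb_false. apply xorb_false_r.
  apply E_occ_occ; auto.
Qed.

Lemma f_col C s Y0 x y : (forall y', ~ In (x,y') C) -> fpar C s Y0 (x,y) = false.
Proof.
  intro Hc. unfold fpar; simpl. generalize (Z.to_nat (y - Y0)). intro n. induction n; simpl; auto.
  rewrite IHn, eb_false; auto. apply E_emp_emp; auto. rewrite nb1; auto.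
Qed.

Lemma f_high C s P Y0 Xmax Ymax x y : Hyp C s P -> below C Y0 ->
  (forall q, In q C -> (fst q <= Xmax)%Z) -> (forall q, In q C -> (snd q <= Ymax)%Z) ->
  (Ymax < y)%Z -> fpar C s Y0 (x,y) = false.
Proof.
  intros HH HB HX HY Hy.
  assert (forall n x, Z.to_nat (Xmax + 1 - x) = n -> fpar C s Y0 (x,y) = false).
  { intro n. induction n; intros x' Hn.
    - apply f_col. intros y' Hin. apply HX in Hin. simpl in Hin. lia.
    - assert (E1 : fpar C s Y0 ((x'+1)%Z, y) = false) by (apply IHn; lia).
      rewrite (fH C s P) in E1 by auto. rewrite eb_false in E1. rewrite xorb_false_r in E1; auto.
      apply E_emp_emp.
      + intro Hin. apply HY in Hin. simpl in Hin. lia.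
      + rewrite nb0. intro Hin. apply HY in Hin. simpl in Hin. lia. }
  apply (H _ x eq_refl).
Qed.

Lemma visit C s P Y0 w i : Hyp C s P -> below C Y0 -> In w C -> ~ In (nb w i) C ->
  fpar C s Y0 w = true -> fpar C s Y0 (nb w i) = false -> exists k, snd (it C s k) = w.
Proof.
  intros HH HB Hw Hx Hf Hf'. rewrite (cob C s P) in Hf' by auto. rewrite Hf in Hf'.
  unfold eb in Hf'. destruct (excluded_middle_informative (E C s w i)) as [HE|]; [|discriminate].
  apply E_left in HE; auto. destruct HE as [_ [_ [k Hk]]]. exists k. rewrite Hk. reflexivity.
Qed.

Lemma nb_close p i : (Z.abs (fst (nb p i) - fst p) <= 1)%Z /\ (Z.abs (snd (nb p i) - snd p) <= 1)%Z.
Proof. unfold nb, padd. rewrite dir_mod. destruct p as [x y]. cases6 i; cdir; simpl; lia. Qed.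

Definition opos C s k := fst (it C s k).

Lemma pos_dist C s (c : point -> Z) i d : valid C s ->
  (forall p j, (Z.abs (c (nb p j) - c p) <= 1)%Z) ->
  (Z.abs (c (opos C s (i + d)) - c (opos C s i)) <= Z.of_nat d)%Z.
Proof.
  intros Hs Hc. induction d.
  - rewrite Nat.add_0_r. lia.
  - replace (i + S d) with (S (i + d)) by lia.
    unfold opos in *. rewrite it_S.
    destruct (it_valid C s (i+d) Hs) as [_ [_ Hadj]].
    destruct (it C s (i+d)) as [a b] eqn:Ed. simpl in *.
    apply adj_nb in Hadj as [j ->]. specialize (Hc a j). lia.
Qed.

Lemma it_mod C s P k : 0 < P -> it C s P = s -> it C s k = it C s (k mod P).
Proof.
  intros HP HPs. rewrite (Nat.div_mod_eq k P) at 1.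
  generalize (k / P). intro m. induction m.
  - rewrite Nat.mul_0_r. reflexivity.
  - replace (P * S m + k mod P) with ((P * m + k mod P) + P) by lia.
    rewrite period_shift; auto.
Qed.

Lemma ext_max (c : point -> Z) (l : list point) : l <> [] -> exists m, In m l /\ forall q, In q l -> (c q <= c m)%Z.
Proof.
  induction l as [|a l IH]; intro H; [congruence|].
  destruct l as [|b l'].
  - exists a. split; [left; auto|]. intros q [<-|[]]; lia.
  - destruct IH as [m [Hm Hq]]; [discriminate|].
    destruct (Z_le_gt_dec (c a) (c m)).
    + exists m. split; [right; auto|]. intros q [<-|Hq']; auto.
    + exists a. split; [left; auto|]. intros q [<-|Hq']; [lia|]. specialize (Hq q Hq'). lia.
Qed.

Lemma ext_bl (l : list point) : l <> [] -> exists u, In u l /\ forall q, In q l ->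
  (snd u < snd q)%Z \/ (snd u = snd q /\ (fst u <= fst q)%Z).
Proof.
  induction l as [|a l IH]; intro H; [congruence|].
  destruct l as [|b l'].
  - exists a. split; [left; auto|]. intros q [<-|[]]; right; lia.
  - destruct IH as [m [Hm Hq]]; [discriminate|].
    destruct (Z_lt_ge_dec (snd a) (snd m)) as [H1|H1].
    + exists a. split; [left; auto|]. intros q [<-|Hq']; [right; lia|]. specialize (Hq q Hq'). lia.
    + destruct (Z.eq_dec (snd a) (snd m)) as [H2|H2].
      * destruct (Z_lt_ge_dec (fst a) (fst m)) as [H3|H3].
        -- exists a. split; [left; auto|]. intros q [<-|Hq']; [right; lia|]. specialize (Hq q Hq'). lia.
        -- exists m. split; [right; auto|]. intros q [<-|Hq']; auto. right; lia.
      * exists m. split; [right; auto|]. intros q [<-|Hq']; auto. left; lia.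
Qed.

Lemma nb3 x y : nb (x,y) 3 = ((x-1)%Z, y).
Proof. unfold nb, padd. cdir. simpl. f_equal; lia. Qed.
Lemma nb4 x y : nb (x,y) 4 = (x, (y-1)%Z).
Proof. unfold nb, padd. cdir. simpl. f_equal; lia. Qed.

Lemma count_box (C : list point) X0 Y1 W H : NoDup C ->
  (forall q, In q C -> (X0 <= fst q <= X0 + Z.of_nat W)%Z /\ (Y1 <= snd q <= Y1 + Z.of_nat H)%Z) ->
  length C <= S W * S H.
Proof.
  intros Hnd Hb.
  set (B := list_prod (map (fun k => (X0 + Z.of_nat k)%Z) (seq 0 (S W)))
                      (map (fun k => (Y1 + Z.of_nat k)%Z) (seq 0 (S H)))).
  assert (HB : length B = S W * S H).
  { unfold B. rewrite length_prod, !length_map, !length_seq. reflexivity. }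
  rewrite <- HB. apply NoDup_incl_length; auto.
  intros [x y] Hq. destruct (Hb _ Hq) as [[H1 H2] [H3 H4]]. cbn [fst snd] in *.
  unfold B. apply in_prod.
  - apply in_map_iff. exists (Z.to_nat (x - X0)). split; [lia|]. apply in_seq. lia.
  - apply in_map_iff. exists (Z.to_nat (y - Y1)). split; [lia|]. apply in_seq. lia.
Qed.

Lemma HC_of C : NoDup C -> 2 <= length C -> connected C ->
  forall v, In v C -> exists j, In (nb v j) C.
Proof.
  intros Hnd Hn Hconn v Hv.
  assert (exists q, In q C /\ q <> v) as [q [Hq Hqv]].
  { destruct C as [|a [|b l]]; simpl in Hn; try lia.
    inversion Hnd; subst. destruct (classic (a = v)) as [->|Hav].
    - exists b. split; [simpl; auto|]. intro; subst. apply H1; simpl; auto.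
    - exists a. split; [simpl; auto|auto]. }
  pose proof (Hconn v q Hv Hq) as Hp. inversion Hp; subst.
  - congruence.
  - apply path_start in H1. apply adj_nb in H0 as [j ->]. exists j; auto.
Qed.

Lemma visit_pos C s P Y0 w i : Hyp C s P -> below C Y0 -> In w C -> ~ In (nb w i) C ->
  fpar C s Y0 w = true -> fpar C s Y0 (nb w i) = false -> exists j, j < P /\ opos C s j = w.
Proof.
  intros HH HB Hw Hx Hf Hf'. destruct (visit C s P Y0 w i HH HB Hw Hx Hf Hf') as [k Hk].
  destruct HH as [Hs [HP [HPs HC]]].
  exists (S k mod P). split. apply Nat.mod_upper_bound; lia.
  unfold opos. rewrite <- (it_mod C s P) by auto. rewrite it_S. rewrite <- Hk.
  destruct (it C s k); reflexivity.
Qed.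

Lemma two_visits C s P (c : point -> Z) a b : valid C s -> 0 < P -> it C s P = s ->
  (forall p j, (Z.abs (c (nb p j) - c p) <= 1)%Z) -> a < P -> b < P ->
  (2 * Z.abs (c (opos C s b) - c (opos C s a)) <= Z.of_nat P)%Z.
Proof.
  intros Hs HP HPs Hc Ha Hb.
  assert (Hper : forall k, opos C s (k + P) = opos C s k).
  { intro k. unfold opos. rewrite period_shift; auto. }
  assert (Hw : forall a b, a < P -> b < P -> a <= b ->
    (2 * Z.abs (c (opos C s b) - c (opos C s a)) <= Z.of_nat P)%Z).
  { clear a b Ha Hb. intros a b Ha Hb Hab.
    pose proof (pos_dist C s c a (b - a) Hs Hc) as D1. replace (a + (b - a)) with b in D1 by lia.
    pose proof (pos_dist C s c b (P - b + a) Hs Hc) as D2.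
    replace (b + (P - b + a)) with (a + P) in D2 by lia. rewrite Hper in D2.
    lia. }
  destruct (le_lt_dec a b). apply Hw; auto.
  specialize (Hw b a Hb Ha ltac:(lia)).
  lia.
Qed.

Theorem lemma1 (C : list point) (Hnd : NoDup C) (Hn : (2 <= length C)%nat)
  (Hconn : connected C) (Hholes : no_holes C) :
  exists p : nat, perimeter C p /\ (sqrt (INR (length C)) <= INR p)%R.
Proof.
  assert (Cne : C <> []) by (intro; subst; simpl in Hn; lia).
  pose proof (HC_of C Hnd Hn Hconn) as HC.
  destruct (ext_bl C Cne) as [u [Hu Hbl]].
  set (s := start_dart C u).
  assert (Hsnd : snd s = nb u (succ_idx (Gv C u) 3)).
  { unfold s, start_dart. simpl. change (padd u (dir 3)) with (nb u 3). rewrite succ_nb. reflexivity. }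
  assert (Hs : valid C s).
  { split; [|split]; [simpl; auto| |].
    - rewrite Hsnd. apply Gv_In. apply B1. lia. destruct (HC u Hu) as [j Hj]. apply (any_of C u j Hj).
    - change (fst s) with u. rewrite Hsnd. apply adj_nb. eexists; reflexivity. }
  destruct (return_exists C s Hs) as [m0 Hm0].
  destruct (min_exists (fun m => 0 < m /\ it C s m = it C s 0) m0 Hm0) as [P [[HP HPs] Hmin]].
  change (it C s 0) with s in HPs, Hmin.
  assert (HH : Hyp C s P) by (split; [exact Hs|split; [exact HP|split; [exact HPs|exact HC]]]).
  exists P. split.
  { exists u. split; [split; auto|]. split; auto. split; [exact HPs|].
    intros k Hk Heq. apply (Hmin k); [lia|]. split; [lia|exact Heq]. }
  set (Y0 := (snd u - 1)%Z).
  assert (HB : below C Y0).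
  { intros q Hq. destruct (Hbl q Hq); unfold Y0; lia. }
  destruct u as [xu yu].
  assert (Hu4 : ~ In (nb (xu,yu) 4) C).
  { rewrite nb4. intro H. destruct (Hbl _ H); simpl in *; lia. }
  assert (Hu3 : ~ In (nb (xu,yu) 3) C).
  { rewrite nb3. intro H. destruct (Hbl _ H); simpl in *; lia. }
  assert (Hfu : fpar C s Y0 (xu,yu) = true).
  { pose proof (cob C s P Y0 (nb (xu,yu) 4) 1 HH HB) as Hc.
    replace (nb (nb (xu, yu) 4) 1) with (xu,yu) in Hc.
    2:{ rewrite <- (nb_back (xu,yu) 4) at 1. rewrite nb_mod. reflexivity. }
    rewrite Hc. rewrite nb4. unfold fpar at 1. simpl. unfold Y0. simpl.
    replace (yu - 1 - (yu - 1))%Z with 0%Z by lia. simpl.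
    rewrite <- nb4. rewrite (eb_mod C s _ 1).
    replace (1 mod 6) with ((4 + 3) mod 6) by reflexivity. rewrite <- eb_mod. rewrite eb_sym.
    unfold eb. destruct (excluded_middle_informative (E C s (xu, yu) 4)) as [|HE]; auto.
    exfalso. apply HE. apply E_left; auto.
    apply (Sidx_out C s P); auto.
    exists 0. change (it C s 0) with s. destruct s as [s1 s2] eqn:Es. simpl in Hsnd.
    assert (s1 = (xu,yu)) by (unfold s in Es; unfold start_dart in Es; injection Es; auto).
    subst. f_equal. rewrite nb_mod, (nb_mod _ (succ_idx _ (4 mod 6))). f_equal.
    change (4 mod 6) with ((3+1) mod 6). symmetry. apply B8. lia.
    destruct (HC _ Hu) as [j Hj]. apply (any_of C _ j Hj). apply Gv_notIn. auto. }
  destruct (ext_max snd C Cne) as [t [Ht Htm]].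
  destruct (ext_max fst C Cne) as [r [Hr Hrm]].
  destruct (ext_max (fun q => - fst q)%Z C Cne) as [l [Hl Hlm]].
  assert (Hft : fpar C s Y0 t = true).
  { rewrite (f_path C s P Y0 (xu,yu) t HH HB); auto. }
  assert (Hfr : fpar C s Y0 r = true).
  { rewrite (f_path C s P Y0 (xu,yu) r HH HB); auto. }
  assert (Hfl : fpar C s Y0 l = true).
  { rewrite (f_path C s P Y0 (xu,yu) l HH HB); auto. }
  destruct t as [xt yt]. destruct r as [xr yr]. destruct l as [xl yl].
  assert (Vt : exists j, j < P /\ opos C s j = (xt,yt)).
  { apply (visit_pos C s P Y0 (xt,yt) 1); auto.
    - rewrite nb1. intro H. apply Htm in H. simpl in H. lia.
    - rewrite nb1. apply (f_high C s P Y0 xr yt); auto; try lia. }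
  assert (Vr : exists j, j < P /\ opos C s j = (xr,yr)).
  { apply (visit_pos C s P Y0 (xr,yr) 0); auto.
    - rewrite nb0. intro H. apply Hrm in H. simpl in H. lia.
    - rewrite nb0. apply f_col. intros y' H. apply Hrm in H. simpl in H. lia. }
  assert (Vl : exists j, j < P /\ opos C s j = (xl,yl)).
  { apply (visit_pos C s P Y0 (xl,yl) 3); auto.
    - rewrite nb3. intro H. apply Hlm in H. simpl in H. lia.
    - rewrite nb3. apply f_col. intros y' H. apply Hlm in H. simpl in H. lia. }
  destruct Vt as [jt [Hjt Pt]]. destruct Vr as [jr [Hjr Pr]]. destruct Vl as [jl [Hjl Pl]].
  assert (Hcx : forall p j, (Z.abs (fst (nb p j) - fst p) <= 1)%Z) by (intros; apply nb_close).
  assert (Hcy : forall p j, (Z.abs (snd (nb p j) - snd p) <= 1)%Z) by (intros; apply nb_close).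
  assert (Hpos0 : opos C s 0 = (xu,yu)) by reflexivity.
  pose proof (two_visits C s P snd 0 jt Hs HP HPs Hcy ltac:(lia) Hjt) as DY.
  rewrite Pt, Hpos0 in DY. cbn [fst snd] in DY.
  pose proof (two_visits C s P fst jl jr Hs HP HPs Hcx Hjl Hjr) as DX.
  rewrite Pr, Pl in DX. cbn [fst snd] in DX.
  set (W := Z.to_nat (xr - xl)). set (H := Z.to_nat (yt - yu)).
  assert (Hbox : length C <= S W * S H).
  { apply (count_box C xl yu); auto. intros [x y] Hq. simpl.
    pose proof (Hrm _ Hq). pose proof (Hlm _ Hq). pose proof (Htm _ Hq). pose proof (HB _ Hq).
    simpl in *. unfold W, H, Y0 in *. lia. }
  assert (HWP : 2 * W <= P) by (unfold W; lia).
  assert (HHP : 2 * H <= P) by (unfold H; lia).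
  assert (HP2 : 2 <= P) by (destruct W, H; simpl in Hbox; lia).
  assert (Hsq : length C <= P * P).
  { eapply Nat.le_trans; [exact Hbox|]. apply Nat.mul_le_mono; lia. }
  rewrite <- (sqrt_square (INR P)) by apply pos_INR.
  apply sqrt_le_1_alt. rewrite <- mult_INR. apply le_INR. exact Hsq.
Qed.
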